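(* Let $3\le k\le n-1$ and let $T$ be a tree attaining the maximum value of $M_2$ over $\mathcal{CT}_{n,k}$. If the maximum degree of $T$ is $4$, then the subgraph of $T$ induced by the vertices of degree $4$ is a tree.
   Context: A chemical tree is a tree with maximum degree at most $4$. A segment of a tree is a path of positive length neither of whose end vertices has degree $2$ and all of whose internal vertices have degree $2$. $\mathcal{CT}_{n,k}$ is the class of all $n$-vertex chemical trees with exactly $k$ segments. $M_2(G)=\sum_{uv\in E(G)}d_ud_v$, where $d_v$ is the degree of $v$. *)

(* Defs.v *)
From mathcomp Require Import all_boot.
Set Implicit Arguments. Unset Strict Implicit. Unset Printing Implicit Defensive.

Definition simple_graph n (e : rel 'I_n) : Prop :=
  irreflexive e /\ symmetric e.

Definition deg n (e : rel 'I_n) (v : 'I_n) : nat := #|[set w | e v w]|.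

(* Edges counted as unordered pairs {x,y}, represented by x < y. *)
Definition edges_in n (e : rel 'I_n) (A : {set 'I_n}) : {set 'I_n * 'I_n} :=
  [set p | [&& p.1 \in A, p.2 \in A, (p.1 < p.2)%N & e p.1 p.2]].

Definition tree_on n (e : rel 'I_n) (A : {set 'I_n}) : Prop :=
  A != set0 /\
  (forall u v, u \in A -> v \in A ->
     connect (fun x y => [&& x \in A, y \in A & e x y]) u v) /\
  #|edges_in e A| = (#|A| - 1)%N.

Definition is_tree n (e : rel 'I_n) : Prop :=
  simple_graph e /\ tree_on e [set: 'I_n].

Definition chemical n (e : rel 'I_n) : Prop := forall v, (deg e v <= 4)%N.

(* A segment joining u and v: a path u = x0, x1, ..., xm = v (m >= 1) with
   distinct vertices, end vertices of degree <> 2, internal vertices of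
   degree 2.  The path is  u :: rcons q v, internal vertices are q. *)
Definition segment_between n (e : rel 'I_n) (u v : 'I_n) : Prop :=
  deg e u != 2 /\ deg e v != 2 /\
  exists q : seq 'I_n,
    [&& path e u (rcons q v), uniq (u :: rcons q v)
      & all (fun w => deg e w == 2) q].

(* Number of segments = k.  In a tree the path between two vertices is
   unique, so segments correspond to unordered pairs {u, v} (u < v). *)
Definition num_segments_eq n (e : rel 'I_n) (k : nat) : Prop :=
  exists S : {set 'I_n * 'I_n},
    (forall u v, (u, v) \in S <-> ((u < v)%N /\ segment_between e u v)) /\
    #|S| = k.

Definition in_CT n (k : nat) (e : rel 'I_n) : Prop :=
  is_tree e /\ chemical e /\ num_segments_eq e k.

Definition M2 n (e : rel 'I_n) : nat :=
  \sum_(p in edges_in e [set: 'I_n]) deg e p.1 * deg e p.2.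

Definition max_deg_vertices n (e : rel 'I_n) (d : nat) : {set 'I_n} :=
  [set v | deg e v == d].

(* Main.v *)
Require Import Defs.
From mathcomp Require Import all_boot zify.
From Stdlib Require Import ClassicalEpsilon.
Set Implicit Arguments. Unset Strict Implicit. Unset Printing Implicit Defensive.


Section Gen.
Variable n : nat.
Implicit Types (g : rel 'I_n) (A B C : {set 'I_n}).

Definition rconn g A := fun x y => [&& x \in A, y \in A & g x y].

Lemma edges_sub g B C : B \subset C -> edges_in g B \subset edges_in g C.
Proof.
move=> /subsetP sBC; apply/subsetP => p; rewrite !inE => /and4P[h1 h2 h3 h4].
by rewrite !sBC ?h3 ?h4.
Qed.

Lemma cross g A B x s : path (rconn g A) x s -> x \in B -> last x s \notin B ->
  exists a b, [/\ a \in B, b \notin B, a \in A, b \in A & g a b].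
Proof.
elim: s x => [|y s IH] x /=; first by move=> _ ->.
case/andP=> /and3P[xA yA gxy] ps xB lB.
case: (boolP (y \in B)) => yB; first exact: IH ps yB lB.
by exists x, y.
Qed.

Lemma edge_mem g B a b : symmetric g -> a \in B -> b \in B -> a != b -> g a b ->
  (if (a < b)%N then (a, b) else (b, a)) \in edges_in g B.
Proof.
move=> sg aB bB ab gab; case: ifP => h; rewrite inE /= ?aB ?bB ?h ?gab //.
rewrite sg gab andbT /=; move/negbT: h => h.
have: (a : nat) <> b by move=> /val_inj E; rewrite E eqxx in ab.
lia.
Qed.

Lemma growth g A : symmetric g ->
  (forall u v, u \in A -> v \in A -> connect (rconn g A) u v) ->
  forall B, B \subset A -> B != set0 ->
  (#|edges_in g B| + #|A| <= #|edges_in g A| + #|B|)%N.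
Proof.
move=> sg cA.
suff H: forall m B, (#|A| - #|B| <= m)%N -> B \subset A -> B != set0 ->
  (#|edges_in g B| + #|A| <= #|edges_in g A| + #|B|)%N by move=> B; apply: H.
elim=> [|m IH] B hm sBA nB.
  have eAB: #|A| <= #|B| by lia.
  have EB : B = A by apply/eqP; rewrite eqEcard sBA eAB.
  by subst B; lia.
case: (boolP (A \subset B)) => hAB.
  have EB : B = A by apply/eqP; rewrite eqEsubset sBA hAB.
  by subst B; lia.
case/subsetPn: hAB => y yA yB.
case/set0Pn: nB => x0 x0B.
have x0A : x0 \in A by apply: (subsetP sBA).
case/connectP: (cA _ _ x0A yA) => s ps ly.
have [a [b [aB bB aA bA gab]]] := cross ps x0B (ltac:(by rewrite -ly)).
set B' := b |: B.
have cB' : #|B'| = #|B|.+1 by rewrite cardsU1 bB.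
have sB'A : B' \subset A by rewrite subUset sub1set bA sBA.
have := IH B' ltac:(rewrite cB'; lia) sB'A ltac:(by apply/set0Pn; exists b; rewrite !inE eqxx).
have ab : a != b by apply/eqP=> E; subst; rewrite aB in bB.
have prop : edges_in g B \proper edges_in g B'.
  apply/properP; split; first by apply: edges_sub; rewrite subsetUr.
  exists (if (a < b)%N then (a, b) else (b, a)).
    by apply: edge_mem => //; rewrite !inE ?eqxx ?aB ?orbT.
  by case: ifP => _; rewrite inE /= ?(negbTE bB) ?andbF.
have := proper_card prop; move: cB'; clear; lia.
Qed.

End Gen.


Section Tree.
Variable n : nat.
Implicit Types (g : rel 'I_n) (A B C : {set 'I_n}).

Definition sp (z x a b : 'I_n) := ((a == z) && (b == x)) || ((a == x) && (b == z)).

Definition rm g z x := fun a b => g a b && ~~ sp z x a b.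

Lemma rm_sym g z x : symmetric g -> symmetric (rm g z x).
Proof. by move=> sg a b; rewrite /rm /sp sg [X in _ || X]andbC [X in X || _]andbC orbC. Qed.

Lemma conn_tree g : tree_on g [set: 'I_n] -> forall u v, connect g u v.
Proof.
move=> [_ [c _]] u v; have := c u v (in_setT _) (in_setT _).
by rewrite (@eq_connect _ _ g) // => a b; rewrite !in_setT.
Qed.

Lemma edges_rm g z x : symmetric g -> z != x -> g z x ->
  (#|edges_in (rm g z x) [set: 'I_n]| < #|edges_in g [set: 'I_n]|)%N.
Proof.
move=> sg zx gzx; apply: proper_card; apply/properP; split.
  by apply/subsetP=> p; rewrite !inE /rm; case/and4P=> _ _ -> /andP[-> _].
exists (if (z < x)%N then (z, x) else (x, z)).
  by apply: edge_mem; rewrite ?in_setT.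
by case: ifP => _; rewrite inE /= /rm /sp !eqxx /= ?orbT ?andbF.
Qed.

Lemma no_cycle g z t : symmetric g -> tree_on g [set: 'I_n] ->
  uniq (z :: t) -> path g z t -> (2 <= size t)%N -> g (last z t) z -> False.
Proof.
move=> sg tr ut pt st gl.
have [y [m [x Et]]] : exists y m x, t = y :: rcons m x.
  case: t st {ut pt gl} => [|y t2] // st; case/lastP: t2 st => [|m w] // _.
  by exists y, m, w.
subst t; rewrite /= last_rcons in gl.
move: ut pt; rewrite /= rcons_path !inE mem_rcons !inE !negb_or rcons_uniq mem_rcons !inE negb_or.
move=> /and4P[/and3P[zy zx zm] /andP[yx ym] xm um] /and3P[gzy pym gl'].
have sgr := rm_sym z x sg.
have conn' : forall u v, connect (rm g z x) u v.
  have hz : connect (rm g z x) z x.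
    apply/connectP; exists (y :: rcons m x); last by rewrite /= last_rcons.
    rewrite /= /rm gzy /sp !eqxx /= (negbTE yx) (negbTE zx) /=.
    rewrite rcons_path; apply/andP; split.
      apply: (@sub_in_path _ [pred w | (w != z) && (w != x)] g) => //.
        move=> a b; rewrite !inE => /andP[az ax] /andP[bz bx] gab.
        by rewrite /rm gab /sp (negbTE az) (negbTE ax).
      rewrite /= (eq_sym y z) zy yx /=.
      apply/allP=> w wm; rewrite inE; apply/andP; split; apply/eqP=> E; subst w.
        by rewrite wm in zm.
      by rewrite wm in xm.
    rewrite /rm gl' /sp eqxx !andbT.
    have : last y m != z.
      move: (mem_last y m); rewrite inE => /orP[/eqP->|lm]; first by rewrite eq_sym.
      by apply/eqP=> E; move: lm; rewrite E => lm; rewrite lm in zm.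
    by move=> /negbTE ->; rewrite (eq_sym x z) (negbTE zx) andbF.
  have sub : subrel g (connect (rm g z x)).
    move=> a b gab; case: (boolP (sp z x a b)) => h.
      case/orP: h => /andP[/eqP-> /eqP->] //.
      by rewrite (sym_connect_sym sgr).
    by apply: connect1; rewrite /rm gab h.
  by move=> u v; apply: (connect_sub sub); apply: conn_tree.
have cA : forall u v, u \in [set: 'I_n] -> v \in [set: 'I_n] ->
    connect (rconn (rm g z x) [set: 'I_n]) u v.
  move=> u v _ _; rewrite (@eq_connect _ _ (rm g z x)) //.
  by move=> a b; rewrite /rconn !in_setT.
have := growth sgr cA (subsetT [set z]) (ltac:(by apply/set0Pn; exists z; rewrite inE)).
rewrite cardsT card_ord cards1.
have := edges_rm sg zx (ltac:(by rewrite sg)).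
case: tr => _ [_ ->].
have := ltn_ord z.
rewrite cardsT card_ord; clear; lia.
Qed.


Lemma no_back g a q x z : symmetric g -> tree_on g [set: 'I_n] ->
  uniq (a :: rcons q x) -> path g a (rcons q x) -> g x z ->
  z \in a :: q -> z != last a q -> False.
Proof.
move=> sg tr u p gxz zin zl.
have [s1 [s2 E0]] : exists s1 s2, a :: q = s1 ++ z :: s2.
  by case/splitPr: zin => s1 s2; exists s1, s2.
have E : a :: rcons q x = s1 ++ z :: rcons s2 x.
  by rewrite -rcons_cons E0 rcons_cat.
move: u p; rewrite -/(sorted g (a :: rcons q x)) E sorted_cat_cons cat_uniq.
move=> /and3P[_ _ u2] /andP[_ p2].
apply: (no_cycle sg tr u2 p2); last by rewrite last_rcons.
case: s2 E0 E {u2 p2} => [|y s2] E0 E; last by rewrite /= size_rcons.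
exfalso; move: zl; have : last a q = last a (a :: q) by [].
by move=> ->; rewrite E0 last_cat /= eqxx.
Qed.

Lemma uniq_size (s : seq 'I_n) : uniq s -> (size s <= n)%N.
Proof. by move=> /card_uniqP <-; apply: leq_trans (max_card _) _; rewrite card_ord. Qed.

Lemma deg2_other g x y : (2 <= deg g x)%N -> exists2 w, g x w & w != y.
Proof.
move=> d; have : (0 < #|[set w | g x w] :\ y|)%N.
  by move: d; rewrite /deg (cardsD1 y) => d; clear -d; lia.
by case/card_gt0P => w; rewrite !inE => /andP[wy gw]; exists w.
Qed.

Lemma ext_leaf g a q L : symmetric g -> irreflexive g -> tree_on g [set: 'I_n] ->
  uniq (a :: rcons q L) -> path g a (rcons q L) ->
  exists q' L', [/\ uniq (a :: rcons q' L'), path g a (rcons q' L'),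
    (exists r, rcons q' L' = rcons q L ++ r) & (deg g L' <= 1)%N].
Proof.
move=> sg ig tr.
suff H : forall k q L, (n - size q <= k)%N -> uniq (a :: rcons q L) -> path g a (rcons q L) ->
  exists q' L', [/\ uniq (a :: rcons q' L'), path g a (rcons q' L'),
    (exists r, rcons q' L' = rcons q L ++ r) & (deg g L' <= 1)%N].
  by apply: (H n) => //; rewrite leq_subr.
elim=> [|k IH] {}q {}L hk u p.
all: case: (leqP (deg g L) 1) => dL; first by exists q, L; split => //; exists [::]; rewrite cats0.
all: have [w gw wl] := deg2_other (last a q) dL.
all: have wnin : w \notin a :: rcons q L.
all: first [ (rewrite -rcons_cons mem_rcons inE; apply/negP => /orP[/eqP E|win];
     [by subst w; rewrite ig in gw| exact: (no_back sg tr u p gw win wl)]) | idtac ].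
- have := uniq_size (s := a :: rcons (rcons q L) w).
  rewrite -[a :: rcons (rcons q L) w]rcons_cons rcons_uniq wnin u => /(_ isT).
  move: hk; rewrite leqn0 subn_eq0 /= !size_rcons => hk h; exfalso; move: (leq_trans h hk); clear; lia.
- have u' : uniq (a :: rcons (rcons q L) w) by rewrite -rcons_cons rcons_uniq wnin u.
  have p' : path g a (rcons (rcons q L) w) by rewrite rcons_path p last_rcons gw.
  have [q' [L' [u'' p'' [r Er] d']]] := IH (rcons q L) w ltac:(rewrite size_rcons; clear -hk; lia) u' p'.
  by exists q', L'; split => //; exists (w :: r); rewrite Er -cats1 -catA.
Qed.


Lemma cut_edge g z x : symmetric g -> tree_on g [set: 'I_n] -> z != x -> g z x ->
  connect (rm g z x) z x -> False.
Proof.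
move=> sg tr zx gzx hz.
have sgr := rm_sym z x sg.
have conn' : forall u v, connect (rm g z x) u v.
  have sub : subrel g (connect (rm g z x)).
    move=> a b gab; case: (boolP (sp z x a b)) => h.
      case/orP: h => /andP[/eqP-> /eqP->] //.
      by rewrite (sym_connect_sym sgr).
    by apply: connect1; rewrite /rm gab h.
  by move=> u v; apply: (connect_sub sub); apply: conn_tree.
have cA : forall u v, u \in [set: 'I_n] -> v \in [set: 'I_n] ->
    connect (rconn (rm g z x) [set: 'I_n]) u v.
  move=> u v _ _; rewrite (@eq_connect _ _ (rm g z x)) //.
  by move=> a b; rewrite /rconn !in_setT.
have := growth sgr cA (subsetT [set z]) (ltac:(by apply/set0Pn; exists z; rewrite inE)).
rewrite cardsT card_ord cards1.
have := edges_rm sg zx gzx.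
case: tr => _ [_ ->].
have := ltn_ord z.
rewrite cardsT card_ord; clear; lia.
Qed.

Lemma path_rm_avoid g a c y s : path g y s -> a \notin y :: s ->
  path (rm g a c) y s.
Proof.
move=> p nin; apply: (@sub_in_path _ [pred w | w != a] g) => //.
  by move=> u v; rewrite !inE => ua va guv; rewrite /rm guv /sp (negbTE ua) (negbTE va) andbF.
by apply/allP=> w win; rewrite inE; apply/eqP=> E; subst w; rewrite win in nin.
Qed.

Lemma unique_head g a c s c' s' : symmetric g -> tree_on g [set: 'I_n] ->
  path g a (c :: s) -> a \notin c :: s -> path g a (c' :: s') -> a \notin c' :: s' ->
  last c s = last c' s' -> c = c'.
Proof.
move=> sg tr p nin p' nin' El; apply/eqP; apply/negPn/negP => cc.
have ac : a != c by apply/eqP=> E; subst c; rewrite inE eqxx in nin.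
move: p p' => /= /andP[gac pc] /andP[gac' pc'].
apply: (cut_edge sg tr ac gac).
have sgr := rm_sym a c sg.
apply: (@connect_trans _ _ (last c s)).
  rewrite El; apply/connectP; exists (c' :: s') => //=.
  rewrite /rm gac' /sp eqxx /= (eq_sym c' c) (negbTE cc) /=.
  have -> : (a == c) = false by apply/negbTE.
  by rewrite /=; apply: path_rm_avoid.
rewrite (sym_connect_sym sgr); apply/connectP; exists s => //.
exact: path_rm_avoid.
Qed.
End Tree.


Section Seg.
Variable n : nat.
Implicit Types g : rel 'I_n.

Definition segpath g (a : 'I_n) q b :=
  [&& path g a (rcons q b), uniq (a :: rcons q b) & all (fun w => deg g w == 2) q].

Definition segb g a b : bool :=
  if excluded_middle_informative (segment_between g a b) then true else false.

Lemma segbP g a b : reflect (segment_between g a b) (segb g a b).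
Proof. by rewrite /segb; case: excluded_middle_informative => h; constructor. Qed.



Lemma path_head g x q (b : 'I_n) : path g x (rcons q b) -> g x (head b q).
Proof. by case: q => [|y q] /= /andP[]. Qed.

Lemma mem_head_rcons q (b : 'I_n) : head b q \in rcons q b.
Proof. by case: q => [|y q]; rewrite /= inE eqxx. Qed.

Lemma deg2_eq g c x y z : deg g c = 2 -> g c x -> g c y -> g c z ->
  x != z -> y != z -> x = y.
Proof.
move=> d gx gy gz xz yz; apply/eqP/negPn/negP => xy.
have : (#|z |: [set x; y]| <= deg g c)%N.
  apply: subset_leq_card; apply/subsetP => w; by rewrite !inE => /orP[|/orP[|]] /eqP->.
by rewrite d cardsU1 cards2 !inE negb_or (eq_sym z x) (eq_sym z y) xy xz yz.
Qed.

Lemma det g : symmetric g -> forall q prev b q' b',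
  segpath g prev q b -> deg g b != 2 -> segpath g prev q' b' -> deg g b' != 2 ->
  head b q = head b' q' -> b = b'.
Proof.
move=> sg; elim=> [|c q IH] prev b [|c' q'] b' /and3P[p u a] db /and3P[p' u' a'] db' /= hh.
- done.
- by subst; move: a' => /= /andP[/eqP d _]; rewrite d in db.
- by subst; move: a => /= /andP[/eqP d _]; rewrite d in db'.
subst c'.
move: p p' u u' a a' => /= /andP[gpc pc] /andP[_ pc'] /andP[nin u] /andP[nin' u'] /andP[/eqP dc a] /andP[_ a'].
apply: (IH c b q' b') => //; try by apply/and3P.
apply: (deg2_eq dc (z := prev)).
- exact: path_head pc.
- exact: path_head pc'.
- by rewrite sg.
- by apply/eqP=> E; move: nin; rewrite inE negb_or -E mem_head_rcons andbF.
- by apply/eqP=> E; move: nin'; rewrite inE negb_or -E mem_head_rcons andbF.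
Qed.


Lemma head_rcons2 q (x w : 'I_n) : head w (rcons q x) = head x q.
Proof. by case: q. Qed.

Lemma walk g a c : symmetric g -> irreflexive g -> tree_on g [set: 'I_n] ->
  g a c -> exists q b, [/\ segpath g a q b, deg g b != 2 & head b q = c].
Proof.
move=> sg ig tr gac.
suff H : forall k q x, (n - size q <= k)%N -> segpath g a q x -> head x q = c ->
   exists q b, [/\ segpath g a q b, deg g b != 2 & head b q = c].
  apply: (H n [::] c); [by rewrite leq_subr | | by []].
  rewrite /segpath /= gac inE !andbT /=; apply/eqP => E; by rewrite E ig in gac.
elim=> [|k IH] q x hk sp hh.
all: case: (boolP (deg g x == 2)) => dx; last by exists q, x.
all: have [w gw wl] := deg2_other (last a q) (ltac:(by rewrite (eqP dx)) : (2 <= deg g x)%N).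
all: move: sp => /and3P[p u al].
all: have wnin : w \notin a :: rcons q x.
all: first [ (rewrite -rcons_cons mem_rcons inE; apply/negP => /orP[/eqP E|win];
     [by subst w; rewrite ig in gw| exact: (no_back sg tr u p gw win wl)]) | idtac ].
- have := uniq_size (s := a :: rcons (rcons q x) w).
  rewrite -[a :: rcons (rcons q x) w]rcons_cons rcons_uniq wnin u => /(_ isT).
  move: hk; rewrite leqn0 subn_eq0 /= !size_rcons => hk h; exfalso; move: (leq_trans h hk); clear; lia.
- apply: (IH (rcons q x) w); first by rewrite size_rcons; clear -hk; lia.
    by rewrite /segpath rcons_path p last_rcons gw -rcons_cons rcons_uniq wnin u all_rcons dx al.
  by rewrite head_rcons2.
Qed.

Definition Seg g := [set p : 'I_n * 'I_n | segb g p.1 p.2].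
Definition Darts g := [set p : 'I_n * 'I_n | g p.1 p.2 && (deg g p.1 != 2)].
Definition chq g (a b : 'I_n) : seq 'I_n :=
  epsilon (inhabits [::]) (fun q => segpath g a q b).
Definition fd g (p : 'I_n * 'I_n) := (p.1, head p.2 (chq g p.1 p.2)).

Lemma segE g a b : segment_between g a b ->
  [/\ deg g a != 2, deg g b != 2 & segpath g a (chq g a b) b].
Proof.
case=> da [db ex]; split=> //; rewrite /chq.
by apply: (epsilon_spec (inhabits [::]) (fun q => segpath g a q b)).
Qed.

Lemma segpath_head g a q b q' : symmetric g -> tree_on g [set: 'I_n] ->
  segpath g a q b -> segpath g a q' b -> head b q = head b q'.
Proof.
move=> sg tr /and3P[p u _] /and3P[p' u' _].
have E : forall r : seq 'I_n, rcons r b = head b r :: behead (rcons r b) by case.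
have L : forall r : seq 'I_n, last (head b r) (behead (rcons r b)) = b.
  by case=> [|y r] //=; rewrite last_rcons.
move: p u p' u'; rewrite (E q) (E q') => p u p' u'.
apply: (unique_head sg tr p _ p' _).
all: first [by rewrite !L | by move: u => /andP[] | by move: u' => /andP[]].
Qed.

Lemma seg_card g : symmetric g -> irreflexive g -> tree_on g [set: 'I_n] ->
  #|Seg g| = #|Darts g|.
Proof.
move=> sg ig tr.
rewrite -(@card_in_imset _ _ (fd g) (Seg g)).
  have -> : fd g @: Seg g = Darts g; last by [].
  apply/setP => -[a c]; apply/imsetP/idP.
    case=> -[a' b]; rewrite inE => /segbP sb [-> ->].
    have [da db spq] := segE sb.
    by rewrite inE /= da andbT; move: spq => /and3P[/path_head].
  rewrite inE /= => /andP[gac da].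
  have [q [b [spq db hq]]] := walk sg ig tr gac.
  have sb : segment_between g a b by split=> //; split=> //; exists q.
  exists (a, b); first by rewrite inE; apply/segbP.
  by rewrite /fd /= -hq (segpath_head sg tr spq (q' := chq g a b)) //; case: (segE sb).
move=> [a b] [a' b'] /=; rewrite !inE => /segbP h1 /segbP h2 [Ea Eh].
subst a'; congr pair.
case: (segE h1) => _ d1 s1; case: (segE h2) => _ d2 s2.
exact: (det sg s1 d1 s2 d2 Eh).
Qed.

Lemma darts_sum g : #|Darts g| = \sum_(a | deg g a != 2) deg g a.
Proof.
rewrite /Darts -sum1dep_card.
rewrite (eq_bigl (fun p => (deg g p.1 != 2) && g p.1 p.2)); last by move=> p; rewrite andbC.
rewrite -(pair_big_dep (fun a => deg g a != 2) (fun a b => g a b) (fun _ _ => 1)) /=.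
by apply: eq_bigr => a _; rewrite sum1dep_card.
Qed.

Lemma darts_deg g g' : (forall v, deg g v = deg g' v) -> #|Darts g| = #|Darts g'|.
Proof.
move=> hd; rewrite !darts_sum (eq_bigl (fun a => deg g' a != 2)); last by move=> a; rewrite hd.
by apply: eq_bigr => a _; rewrite hd.
Qed.

Lemma seg_sym g a b : symmetric g -> segment_between g a b -> segment_between g b a.
Proof.
move=> sg [da [db [q /and3P[p u al]]]]; split=> //; split=> //; exists (rev q).
apply/and3P; split.
- have := rev_path g a (rcons q b); rewrite last_rcons belast_rcons rev_cons => ->.
  by rewrite (@eq_path _ _ g) // => x y; rewrite sg.
- by rewrite -rev_cons -rev_rcons rev_uniq.
- by rewrite all_rev.
Qed.

Lemma seg_irr g a : ~ segment_between g a a.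
Proof.
by case=> _ [_ [q /and3P[_ u _]]]; move: u; rewrite /= mem_rcons inE eqxx.
Qed.

Definition Sun g := [set p : 'I_n * 'I_n | (p.1 < p.2)%N && segb g p.1 p.2].
Definition sw (p : 'I_n * 'I_n) := (p.2, p.1).

Lemma seg_sun g : symmetric g -> #|Seg g| = (2 * #|Sun g|)%N.
Proof.
move=> sg.
have sub : Sun g \subset Seg g by apply/subsetP => p; rewrite !inE => /andP[].
rewrite -(cardsID (Sun g) (Seg g)) (setIidPr sub).
have -> : Seg g :\: Sun g = sw @: Sun g.
  apply/setP => -[a b]; rewrite !inE /=; apply/idP/imsetP.
    case/andP => nab /segbP sab; exists (b, a) => //.
    rewrite inE /=; apply/andP; split; last by apply/segbP; apply: seg_sym.
    have : a != b by apply/eqP=> E; subst; apply: (seg_irr sab).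
    move: nab; rewrite (introT (segbP _ _ _) sab) andbT => nab ab.
    have : (a : nat) <> b by move=> /val_inj E; rewrite E eqxx in ab.
    move: nab; clear; lia.
  case=> -[b' a']; rewrite inE /= => /andP[lt /segbP sb] [-> ->].
  rewrite negb_and -leqNgt ltnW //= ; apply/segbP; exact: seg_sym.
rewrite card_imset; first by rewrite mul2n addnn.
by move=> [x y] [x' y'] [-> ->].
Qed.

Lemma seg_transfer g g' k : symmetric g -> irreflexive g -> tree_on g [set: 'I_n] ->
  symmetric g' -> irreflexive g' -> tree_on g' [set: 'I_n] ->
  (forall v, deg g v = deg g' v) -> num_segments_eq g k -> num_segments_eq g' k.
Proof.
move=> sg ig tg sg' ig' tg' hd [S [hS cS]].
exists (Sun g'); split.
  move=> u v; rewrite inE /=; split.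
    by case/andP => -> /segbP.
  by case=> -> /segbP ->.
have ES : S = Sun g.
  apply/setP => -[u v]; rewrite inE /=; apply/idP/idP.
    by move/hS => [-> /segbP ->].
  by case/andP => lt /segbP sb; apply/hS.
have := seg_sun sg; have := seg_sun sg'.
rewrite (seg_card sg ig tg) (seg_card sg' ig' tg') (darts_deg hd) -ES cS.
by move=> -> /eqP; rewrite eqn_mul2l => /orP[|/eqP].
Qed.
End Seg.


Section Swap.
Variable n : nat.
Variable e : rel 'I_n.
Variables a b c d : 'I_n.
Variable m : seq 'I_n.
Hypothesis se : symmetric e.
Hypothesis ie : irreflexive e.
Hypothesis te : tree_on e [set: 'I_n].
Hypothesis eab : e a b.
Hypothesis ecd : e c d.
Hypothesis pbm : path e b m.
Hypothesis lbm : last b m = c.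
Hypothesis mne : m != [::].
Hypothesis uw : uniq (a :: d :: b :: m).

Definition eswap := fun x y =>
  (e x y && ~~ sp a b x y && ~~ sp c d x y) || sp a c x y || sp b d x y.

Lemma cin : c \in m.
Proof. by rewrite -lbm; case: m mne => // y s _; rewrite /= mem_last. Qed.

Lemma uwE : [/\ a \notin d :: b :: m, d \notin b :: m, b \notin m & uniq m].
Proof. by move: uw => /= /and4P[]. Qed.

Lemma ab : a != b.
Proof. by case: uwE; rewrite !inE !negb_or => /and3P[]. Qed.
Lemma ad : a != d.
Proof. by case: uwE; rewrite !inE !negb_or => /and3P[]. Qed.
Lemma db : d != b.
Proof. by case: uwE => _; rewrite !inE !negb_or => /andP[]. Qed.
Lemma ac : a != c.
Proof.
case: uwE; rewrite !inE !negb_or => /and3P[_ _ am] _ _ _.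
by apply: (contraNneq _ am) => ->; apply: cin.
Qed.
Lemma bc : b != c.
Proof. by case: uwE => _ _ bm _; apply: (contraNneq _ bm) => ->; apply: cin. Qed.
Lemma dc : d != c.
Proof.
case: uwE => _; rewrite !inE !negb_or => /andP[_ dm] _ _.
by apply: (contraNneq _ dm) => ->; apply: cin.
Qed.

Lemma nac : ~~ e a c.
Proof.
apply/negP => h.
have u : uniq (a :: b :: m).
  case: uwE; rewrite !inE !negb_or => /and3P[_ _ am] _ bm um.
  by rewrite /= inE negb_or ab am bm um.
apply: (no_cycle se te u); first by rewrite /= eab pbm.
  by case: m mne.
by rewrite /= lbm se.
Qed.

Lemma nbd : ~~ e b d.
Proof.
apply/negP => h.
have u : uniq (b :: rcons m d).
  case: uwE; rewrite !inE !negb_or => _ /andP[_ dm] bm um.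
  by rewrite /= mem_rcons inE negb_or rcons_uniq bm dm um eq_sym db.
apply: (no_cycle se te u); first by rewrite rcons_path pbm lbm ecd.
  by case: m mne => // y s _; rewrite /= size_rcons.
by rewrite last_rcons se.
Qed.


Lemma ba : b != a. Proof. by rewrite eq_sym ab. Qed.
Lemma da : d != a. Proof. by rewrite eq_sym ad. Qed.
Lemma bd : b != d. Proof. by rewrite eq_sym db. Qed.
Lemma ca : c != a. Proof. by rewrite eq_sym ac. Qed.
Lemma cb : c != b. Proof. by rewrite eq_sym bc. Qed.
Lemma cd : c != d. Proof. by rewrite eq_sym dc. Qed.

Ltac simp := rewrite ?eqxx ?(negbTE ab) ?(negbTE ba) ?(negbTE ac) ?(negbTE ca)
  ?(negbTE ad) ?(negbTE da) ?(negbTE bc) ?(negbTE cb) ?(negbTE bd) ?(negbTE db)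
  ?(negbTE cd) ?(negbTE dc) /=.

Lemma eba : e b a. Proof. by rewrite se. Qed.
Lemma edc : e d c. Proof. by rewrite se. Qed.
Lemma nca : ~~ e c a. Proof. by rewrite se nac. Qed.
Lemma ndb : ~~ e d b. Proof. by rewrite se nbd. Qed.

Ltac kill := repeat match goal with H : ?x <> ?y |- context[?x == ?y] => rewrite (introF eqP H) end.
Ltac cases w := case: (w =P a) => [->|?]; [simp | case: (w =P b) => [->|?]; [simp|
  case: (w =P c) => [->|?]; [simp| case: (w =P d) => [->|?]; [simp| kill; rewrite /=]]]];
  rewrite ?eab ?eba ?ecd ?edc ?(negbTE nac) ?(negbTE nca) ?(negbTE nbd) ?(negbTE ndb) ?(ie a) ?(ie b) ?(ie c) ?(ie d)
  ?andbT ?andbF ?orbF ?orbT /=.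

Lemma deg_repl (g g' : rel 'I_n) (v x y : 'I_n) : [set w | g' v w] = x |: ([set w | g v w] :\ y) ->
  g v y -> ~~ g v x -> deg g' v = deg g v.
Proof.
move=> E gy gx; rewrite /deg E cardsU1 (cardsD1 y [set w | g v w]) !inE gy (negbTE gx) andbF.
by [].
Qed.

Lemma deg_e' v : deg eswap v = deg e v.
Proof.
case: (v =P a) => [->|va].
  apply: (@deg_repl e eswap a c b) => //; last exact: nac.
  by apply/setP => w; rewrite !inE /eswap /sp; simp; cases w.
case: (v =P b) => [->|vb].
  apply: (@deg_repl e eswap b d a) => //; [|exact: eba|exact: nbd].
  by apply/setP => w; rewrite !inE /eswap /sp; simp; cases w.
case: (v =P c) => [->|vc].
  apply: (@deg_repl e eswap c a d) => //; last exact: nca.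
  by apply/setP => w; rewrite !inE /eswap /sp; simp; cases w.
case: (v =P d) => [->|vd].
  apply: (@deg_repl e eswap d b c) => //; [|exact: edc|exact: ndb].
  by apply/setP => w; rewrite !inE /eswap /sp; simp; cases w.
rewrite /deg; suff -> : [set w | eswap v w] = [set w | e v w] by [].
apply/setP => w; rewrite !inE /eswap /sp; kill; simp.
by rewrite !andbT !orbF.
Qed.

Lemma sp_sym (z x u v : 'I_n) : sp z x u v = sp z x v u.
Proof. by rewrite /sp orbC andbC [X in _ || X]andbC. Qed.

Lemma se' : symmetric eswap.
Proof. by move=> x y; rewrite /eswap se (sp_sym a b) (sp_sym c d) (sp_sym a c) (sp_sym b d). Qed.

Lemma ie' : irreflexive eswap.
Proof.
move=> x; rewrite /eswap /sp (ie x) /=.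
have F : forall u v : 'I_n, u != v -> (x == u) && (x == v) = false.
  by move=> u v uv; case: (x =P u) => [->|_] //; rewrite (negbTE uv).
by rewrite !F ?ac ?ca ?bd ?db.
Qed.

Definition ord (x y : 'I_n) := if (x < y)%N then (x, y) else (y, x).

Lemma ord_sp (x y u v : 'I_n) : (x < y)%N -> ((x, y) == ord u v) = sp u v x y.
Proof.
move=> lt; rewrite /ord /sp; case: ifP => h; rewrite xpair_eqE.
  case: (boolP ((x == v) && (y == u))) => [/andP[/eqP ex /eqP ey]|_]; last by rewrite orbF.
  by subst; exfalso; move: lt h; clear; lia.
case: (boolP ((x == u) && (y == v))) => [/andP[/eqP ex /eqP ey]|_] //.
by subst; exfalso; move: lt h; clear; lia.
Qed.

Lemma ord_in g (u v : 'I_n) : symmetric g -> u != v -> g u v -> ord u v \in edges_in g [set: 'I_n].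
Proof. by move=> sg uv guv; apply: edge_mem; rewrite ?in_setT. Qed.

Lemma hac (x y : 'I_n) : sp a c x y -> ~~ e x y.
Proof. by case/orP => /andP[/eqP-> /eqP->]; [exact: nac | exact: nca]. Qed.
Lemma hbd (x y : 'I_n) : sp b d x y -> ~~ e x y.
Proof. by case/orP => /andP[/eqP-> /eqP->]; [exact: nbd | exact: ndb]. Qed.

Lemma E_eq : edges_in eswap [set: 'I_n] :\ ord a c :\ ord b d =
  edges_in e [set: 'I_n] :\ ord a b :\ ord c d.
Proof.
apply/setP => -[x y]; rewrite !inE /=.
case: (boolP (x < y)%N) => lt; last by rewrite !andbF.
rewrite !ord_sp // /eswap.
move: (@hac x y) (@hbd x y).
case: (sp a c x y); case: (sp b d x y); case: (sp a b x y); case: (sp c d x y); case: (e x y) => //= h1 h2.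
all: try by have := h1 isT.
all: by have := h2 isT.
Qed.

Lemma ord_ne1 : ord a c != ord b d.
Proof. by rewrite /ord; case: ifP; case: ifP => _ _; rewrite xpair_eqE; simp. Qed.
Lemma ord_ne2 : ord a b != ord c d.
Proof. by rewrite /ord; case: ifP; case: ifP => _ _; rewrite xpair_eqE; simp. Qed.

Lemma n1_in : ord a c \in edges_in eswap [set: 'I_n].
Proof. by apply: ord_in; [exact: se'|exact: ac|rewrite /eswap /sp !eqxx /= orbT]. Qed.
Lemma n2_in : ord b d \in edges_in eswap [set: 'I_n].
Proof. by apply: ord_in; [exact: se'|exact: bd|rewrite /eswap /sp !eqxx /= !orbT]. Qed.
Lemma o1_in : ord a b \in edges_in e [set: 'I_n].
Proof. by apply: ord_in; [exact: se|exact: ab|exact: eab]. Qed.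
Lemma o2_in : ord c d \in edges_in e [set: 'I_n].
Proof. by apply: ord_in; [exact: se|exact: cd|exact: ecd]. Qed.

Lemma card_E' : #|edges_in eswap [set: 'I_n]| = #|edges_in e [set: 'I_n]|.
Proof.
rewrite (cardsD1 (ord a c)) n1_in (cardsD1 (ord b d) (_ :\ _)) in_setD1 n2_in andbT (eq_sym (ord b d)) ord_ne1.
rewrite [RHS](cardsD1 (ord a b)) o1_in (cardsD1 (ord c d) (edges_in e [set: 'I_n] :\ ord a b)) in_setD1 o2_in andbT (eq_sym (ord c d)) ord_ne2.
by rewrite E_eq.
Qed.

Definition fw (p : 'I_n * 'I_n) := deg e p.1 * deg e p.2.

Lemma fw_ord x y : fw (ord x y) = deg e x * deg e y.
Proof. by rewrite /fw /ord; case: ifP => _ //=; rewrite mulnC. Qed.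

Lemma sum_split (E : {set 'I_n * 'I_n}) u v : u \in E -> v \in E -> v != u ->
  \sum_(p in E) fw p = fw u + fw v + \sum_(p in E :\ u :\ v) fw p.
Proof.
move=> uE vE vu; rewrite (bigD1 u) //= (bigD1 v) /=; last by rewrite vE vu.
rewrite addnA; congr (_ + _); apply: eq_bigl => p; rewrite !inE.
by case: (p \in E); case: (p != u); case: (p != v).
Qed.

Lemma M2_swap : M2 eswap + deg e a * deg e b + deg e c * deg e d =
  M2 e + deg e a * deg e c + deg e b * deg e d.
Proof.
have -> : M2 eswap = \sum_(p in edges_in eswap [set: 'I_n]) fw p.
  by apply: eq_bigr => p _; rewrite /fw !deg_e'.
have -> : M2 e = \sum_(p in edges_in e [set: 'I_n]) fw p by [].
rewrite (sum_split n1_in n2_in); last by rewrite eq_sym ord_ne1.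
rewrite (sum_split o1_in o2_in); last by rewrite eq_sym ord_ne2.
rewrite E_eq !fw_ord.
move: (\sum_(p in _) fw p) => S; clear; lia.
Qed.

Lemma mid_path : path eswap b m.
Proof.
apply: (@sub_in_path _ [pred w | (w != a) && (w != d)] e) => //.
  move=> x y; rewrite !inE => /andP[xa xd] /andP[ya yd] exy.
  by rewrite /eswap exy /sp (negbTE xa) (negbTE ya) (negbTE xd) (negbTE yd) /= ?andbF.
apply/allP => w win; rewrite inE.
case: uwE => ha hd _ _.
apply/andP; split.
  by apply: contraNneq ha => <-; rewrite inE win orbT.
by apply: contraNneq hd => <-; rewrite win.
Qed.

Lemma conn_bc : connect eswap b c.
Proof. by apply/connectP; exists m; [exact: mid_path| rewrite lbm]. Qed.

Lemma conn_e' u v : connect eswap u v.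
Proof.
have sy := sym_connect_sym se'.
have cab : connect eswap a b.
  apply: (@connect_trans _ _ c); last by rewrite sy conn_bc.
  by apply: connect1; rewrite /eswap /sp !eqxx /= orbT.
have ccd : connect eswap c d.
  apply: (@connect_trans _ _ b); first by rewrite sy conn_bc.
  by apply: connect1; rewrite /eswap /sp !eqxx /= !orbT.
have sub : subrel e (connect eswap).
  move=> x y exy; case: (boolP (sp a b x y)) => hab.
    by case/orP: hab => /andP[/eqP-> /eqP->] //; rewrite sy.
  case: (boolP (sp c d x y)) => hcd.
    by case/orP: hcd => /andP[/eqP-> /eqP->] //; rewrite sy.
  by apply: connect1; rewrite /eswap exy hab hcd.
by apply: (connect_sub sub); apply: conn_tree.
Qed.

Lemma tree_e' : tree_on eswap [set: 'I_n].
Proof.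
split; first by apply/set0Pn; exists a; rewrite in_setT.
split.
  move=> u v _ _; rewrite (@eq_connect _ _ eswap) ?conn_e' //.
  by move=> x y; rewrite !in_setT.
by rewrite card_E'; case: te => _ [_ ->].
Qed.

Lemma inCT_e' k : chemical e -> num_segments_eq e k -> in_CT k eswap.
Proof.
move=> ch ns; split; first by split; [split; [exact: ie'|exact: se']|exact: tree_e'].
split; first by move=> v; rewrite deg_e'.
apply: (seg_transfer se ie te se' ie' tree_e') => // v; by rewrite deg_e'.
Qed.

Lemma swap_contra k : chemical e -> num_segments_eq e k ->
  (forall g : rel 'I_n, in_CT k g -> (M2 g <= M2 e)%N) ->
  deg e a = 4 -> deg e c = 4 -> (deg e b <= 3)%N -> (deg e d <= 3)%N -> False.
Proof.
move=> ch ns mx da dc db dd.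
have h1 := mx _ (inCT_e' ch ns).
have h2 := M2_swap.
move: h1 h2; rewrite da dc.
move: (M2 eswap) (M2 e) (deg e b) (deg e d) db dd => x y p q hp hq h1 h2; clear -hp hq h1 h2.
nia.
Qed.
End Swap.

Lemma pat0 (T : eqType) (X : pred T) x s : X x -> ~~ all X (x :: s) ->
  exists s1 y z s2, [/\ x :: s = s1 ++ y :: z :: s2, X y & ~~ X z].
Proof.
elim: s x => [|y s IH] x Xx /=; first by rewrite Xx.
rewrite Xx /=; case: (boolP (X y)) => Xy hall.
  have [s1 [y' [z [s2 [E Xy' Xz]]]]] := IH y Xy ltac:(by rewrite /= Xy).
  by exists (x :: s1), y', z, s2; rewrite E.
by exists [::], x, y, s.
Qed.


Lemma connA_main n k (e : rel 'I_n) : symmetric e -> irreflexive e ->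
  tree_on e [set: 'I_n] -> chemical e -> num_segments_eq e k ->
  (forall g : rel 'I_n, in_CT k g -> (M2 g <= M2 e)%N) ->
  forall u w, u \in max_deg_vertices e 4 -> w \in max_deg_vertices e 4 ->
  connect (rconn e (max_deg_vertices e 4)) u w.
Proof.
move=> se ie te ch ns mx u w uA wA.
set A := max_deg_vertices e 4 in uA wA *.
apply/negPn/negP => nc.
case/connectP: (conn_tree te u w) => s0 ps0 lw; subst w.
move: wA nc; case: (shortenP ps0) => s ps us _ wA nc {ps0}.
have hasn : ~~ all [pred x | x \in A] (u :: s).
  apply/negP => allA; apply: (negP nc); apply/connectP; exists s => //.
  apply: (@sub_in_path _ [pred x | x \in A] e) => //.
  by move=> x y xA yA exy; rewrite /rconn xA yA exy.
have [s1 [a [b [s2 [E1 aA bA]]]]] := pat0 uA hasn.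
rewrite /= in aA bA.
have lw : last u s = last b s2.
  by have := congr1 (last u) E1; rewrite /= last_cat.
have {}aA : a \in A := aA.
have {}bA : b \notin A := bA.
case/lastP: s2 E1 lw => [|s3 w] E1 lw.
  by move: wA; rewrite lw /= (negbTE bA).
rewrite last_rcons in lw; rewrite lw in wA nc.
have [q [L Es]] : exists q L, s = rcons q L.
  case/lastP: s E1 {us ps hasn lw wA nc} => [|q L] E1; last by exists q, L.
  by move: E1 => /(congr1 size); rewrite size_cat /= size_rcons; clear; lia.
rewrite Es in us ps.
have [q' [L' [uq pq [r Er] dL]]] := ext_leaf se ie te us ps.
have EW : u :: rcons q' L' = s1 ++ a :: b :: s3 ++ w :: r.
  by rewrite Er -Es -(cat_cons u s r) E1 -catA /= cat_rcons.
have lL : last w r = L'.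
  by have := congr1 (last u) EW; rewrite /= last_rcons last_cat /= last_cat /=.
have LA : L' \notin A by rewrite inE; apply/eqP => E; rewrite E in dL.
have hasn2 : ~~ all [pred x | x \in A] (w :: r).
  apply/negP => /allP /(_ L'); rewrite -lL mem_last => /(_ isT).
  by rewrite /= lL (negbTE LA).
have [s4 [c [d [s5 [E2 cA dA]]]]] := pat0 wA hasn2.
have {}cA : c \in A := cA.
have {}dA : d \notin A := dA.
set m := rcons (s3 ++ s4) c.
have EW2 : u :: rcons q' L' = s1 ++ a :: (b :: m ++ d :: s5).
  by rewrite EW E2 /m cat_rcons -!catA.
have lbm : last b m = c by rewrite /m last_rcons.
have mne : m != [::] by rewrite /m; case: (s3 ++ s4).
clearbody m.
have uW : uniq (a :: d :: b :: m).
  move: uq; rewrite EW2 cat_uniq => /and3P[_ _].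
  have -> : a :: b :: m ++ d :: s5 = (a :: b :: rcons m d) ++ s5 by rewrite /= cat_rcons.
  rewrite cat_uniq => /andP[h _].
  move: h; rewrite /= !inE !mem_rcons !inE rcons_uniq !negb_or.
  case/and4P => /and3P[-> -> ->] /andP[bd ->] -> ->.
  by rewrite eq_sym bd.
move: pq; rewrite -/(sorted e (u :: rcons q' L')) EW2 sorted_cat_cons => /andP[_].
rewrite /= cat_path => /and3P[eab pbm] /= /andP[ecd _].
rewrite lbm in ecd.
have d4 : forall x, x \in A -> deg e x = 4 by move=> x; rewrite inE => /eqP.
have d3 : forall x, x \notin A -> (deg e x <= 3)%N.
  move=> x; rewrite inE => h; have := ch x; move: h; clear; lia.
exact: (swap_contra se ie te eab ecd pbm lbm mne uW ch ns mx (d4 _ aA) (d4 _ cA) (d3 _ bA) (d3 _ dA)).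
Qed.

Theorem corollary1 (n k : nat) (e : rel 'I_n) :
  (3 <= k)%N -> (k <= n - 1)%N ->
  in_CT k e ->
  (forall e' : rel 'I_n, in_CT k e' -> (M2 e' <= M2 e)%N) ->
  (exists v, deg e v = 4) ->
  tree_on e (max_deg_vertices e 4).
Proof.
move=> _ _ [[[ie se] te] [ch ns]] mx [v0 dv0].
have connA := connA_main se ie te ch ns mx.
set A := max_deg_vertices e 4 in connA *.
have v0A : v0 \in A by rewrite inE dv0.
have nA : A != set0 by apply/set0Pn; exists v0.
split; first exact: nA.
split; first exact: connA.
have g1 := growth se connA (ltac:(by rewrite sub1set) : [set v0] \subset A) (ltac:(by apply/set0Pn; exists v0; rewrite inE)).
have cT : forall u v, u \in [set: 'I_n] -> v \in [set: 'I_n] -> connect (rconn e [set: 'I_n]) u v.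
  by case: te => _ [c _].
have g2 := growth se cT (subsetT A) nA.
move: g1 g2; rewrite cards1.
case: te => _ [_ ->].
have := ltn_ord v0.
rewrite cardsT card_ord.
move: #|edges_in e A| #|A| #|edges_in e [set v0]| => x y z; clear; lia.
Qed.
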